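(* There is an absolute constant $C>0$ such that the following holds. Let $G=(V,E)$ be an unweighted graph with maximum vertex degree $d_{\max}$, and let $\{s,t\}\in E$. Then there is a subset $S\subset V$ with $s\in S$, $t\in V\setminus S$, and $$ B_{st}^{2}\leq C\, d_{\max}\,\Theta(S)^{-2}. $$
   Context: For an unweighted graph with $n$ vertices, $L=D-A$ is the graph Laplacian, $L^{+}$ its Moore–Penrose pseudoinverse, $L^{2+}=(L^+)^2$, and $1_v$ the indicator vector of vertex $v$. The biharmonic distance is $B_{st}=\sqrt{(1_s-1_t)^{T}L^{2+}(1_s-1_t)}$. For a nonempty proper subset $S\subset V$, $E(S,V\setminus S)$ is the set of edges with one endpoint in $S$ and one in $V\setminus S$, and the isoperimetric ratio is $\Theta(S)=\frac{n|E(S,V\setminus S)|}{|S||V\setminus S|}$ (the paper states the conclusion as $B_{st}^2\in O(d_{\max}\Theta(S)^{-2})$). *)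

(* Defs.v *)
From HB Require Import structures.
From mathcomp Require Import all_boot all_order all_algebra.
From mathcomp Require Import reals.
Set Implicit Arguments. Unset Strict Implicit. Unset Printing Implicit Defensive.
Import Order.TTheory GRing.Theory Num.Theory.
Local Open Scope ring_scope.

Definition simple_graph (n : nat) (adj : rel 'I_n) : Prop :=
  symmetric adj /\ irreflexive adj.

Definition deg (n : nat) (adj : rel 'I_n) (v : 'I_n) : nat :=
  #|[set w | adj v w]|.

Definition dmax (n : nat) (adj : rel 'I_n) : nat :=
  \max_(v < n) deg adj v.

Definition laplacian (R : realType) (n : nat) (adj : rel 'I_n) : 'M[R]_n :=
  \matrix_(i, j) ((if i == j then (deg adj i)%:R else 0) - (adj i j)%:R).

Definition is_pinv (R : realType) (n : nat) (A X : 'M[R]_n) : Prop :=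
  [/\ A *m X *m A = A, X *m A *m X = X,
      (A *m X)^T = A *m X & (X *m A)^T = X *m A].

Definition ind (R : realType) (n : nat) (v : 'I_n) : 'cV[R]_n :=
  \col_i (i == v)%:R.

Definition biharmonic (R : realType) (n : nat) (Lp : 'M[R]_n) (s t : 'I_n) : R :=
  let b := ind R s - ind R t in
  Num.sqrt ((b^T *m (Lp *m Lp) *m b) 0 0).

(* |E(S, V\S)| : each crossing edge counted once (as the ordered pair
   (x,y) with x in S, y not in S). *)
Definition cut_size (n : nat) (adj : rel 'I_n) (S : {set 'I_n}) : nat :=
  #|[set p : 'I_n * 'I_n | [&& p.1 \in S, p.2 \notin S & adj p.1 p.2]]|.

Definition iso_ratio (R : realType) (n : nat) (adj : rel 'I_n) (S : {set 'I_n}) : R :=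
  (n * cut_size adj S)%:R / (#|S| * #|~: S|)%:R.

(* Main.v *)
Require Import Defs.
From HB Require Import structures.
From mathcomp Require Import all_boot all_order all_algebra.
From mathcomp Require Import reals.
From mathcomp Require Import ring lra zify.
Import Order.TTheory GRing.Theory Num.Theory.
Set Implicit Arguments. Unset Strict Implicit. Unset Printing Implicit Defensive.
Local Open Scope ring_scope.

Definition Lf (R : realType) (n : nat) (adj : rel 'I_n) (y : 'I_n -> R) (i : 'I_n) : R :=
  \sum_j (adj i j)%:R * (y i - y j).

Definition bil (R : realType) (n : nat) (adj : rel 'I_n) (k y : 'I_n -> R) : R :=
  \sum_i \sum_j (adj i j)%:R * ((k i - k j) * (y i - y j)).

Lemma bilE (R : realType) (n : nat) (adj : rel 'I_n) (k y : 'I_n -> R) :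
  symmetric adj -> \sum_i k i * Lf adj y i = bil adj k y / 2.
Proof.
move=> sym.
have E : \sum_i \sum_j (adj i j)%:R * (k j * (y i - y j))
       = - \sum_i \sum_j (adj i j)%:R * (k i * (y i - y j)).
  rewrite exchange_big -sumrN; apply: eq_bigr => i _.
  rewrite -sumrN; apply: eq_bigr => j _.
  by rewrite sym; ring.
have -> : bil adj k y = \sum_i \sum_j (adj i j)%:R * (k i * (y i - y j))
       - \sum_i \sum_j (adj i j)%:R * (k j * (y i - y j)).
  rewrite /bil -sumrB; apply: eq_bigr => i _; rewrite -sumrB; apply: eq_bigr => j _; ring.
rewrite E opprK.
have -> : \sum_i k i * Lf adj y i = \sum_i \sum_j (adj i j)%:R * (k i * (y i - y j)).
  apply: eq_bigr => i _; rewrite /Lf mulr_sumr; apply: eq_bigr => j _; ring.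
by field.
Qed.

Lemma pinv_unique (R : realType) (n : nat) (A X Y : 'M[R]_n) :
  A^T = A -> is_pinv A X -> is_pinv A Y -> X = Y.
Proof.
move=> sA [X1 X2 X3 X4] [Y1 Y2 Y3 Y4].
have tAX : (A *m X)^T = X^T *m A by rewrite trmx_mul sA.
have tAY : (A *m Y)^T = Y^T *m A by rewrite trmx_mul sA.
have tXA : (X *m A)^T = A *m X^T by rewrite trmx_mul sA.
have tYA : (Y *m A)^T = A *m Y^T by rewrite trmx_mul sA.
have AYA : A *m Y^T *m A = A.
  by have := congr1 trmx Y1; rewrite !trmx_mul sA mulmxA.
have AXA : A *m X^T *m A = A.
  by have := congr1 trmx X1; rewrite !trmx_mul sA mulmxA.
have HX : X = X *m A *m Y.
  have e1 : X = X *m X^T *m A by rewrite -mulmxA -tAX X3 mulmxA X2.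
  have e2 : X *m A *m Y = X *m (A *m X) *m (A *m Y) by rewrite !mulmxA X2.
  rewrite e2 -X3 -Y3 tAX tAY !mulmxA -[X *m X^T *m A *m Y^T *m A]mulmxA.
  by rewrite -!mulmxA (mulmxA A) AYA !mulmxA.
have HY : Y = X *m A *m Y.
  have e1 : Y = A *m Y^T *m Y by rewrite -tYA Y4 Y2.
  have e2 : X *m A *m Y = (X *m A) *m (Y *m A) *m Y by rewrite -(mulmxA (X *m A)) Y2.
  by rewrite e2 -X4 -Y4 tXA tYA mulmxA AXA.
by rewrite HY -HX.
Qed.

Lemma pinv_sym (R : realType) (n : nat) (A X : 'M[R]_n) :
  A^T = A -> is_pinv A X -> X^T = X.
Proof.
move=> sA hX; apply: (pinv_unique sA) => //.
case: hX => [X1 X2 X3 X4]; split.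
- by have := congr1 trmx X1; rewrite !trmx_mul sA mulmxA.
- by have := congr1 trmx X2; rewrite !trmx_mul sA mulmxA.
- by rewrite trmx_mul trmxK sA -X4 trmx_mul sA.
- by rewrite trmx_mul trmxK sA -{1}X3 trmx_mul sA.
Qed.

Lemma degE (R : realType) (n : nat) (adj : rel 'I_n) i :
  (deg adj i)%:R = \sum_j (adj i j)%:R :> R.
Proof.
rewrite /deg -sum1dep_card natr_sum big_mkcond /=.
by apply: eq_bigr => j _; case: (adj i j).
Qed.

Lemma lap_sym (R : realType) (n : nat) (adj : rel 'I_n) :
  symmetric adj -> (laplacian R adj)^T = laplacian R adj.
Proof.
move=> sym; apply/matrixP => i j; rewrite !mxE sym eq_sym.
by case: eqP => // ->.
Qed.

Lemma sum_ind (R : realType) (n : nat) (s : 'I_n) (f : 'I_n -> R) :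
  \sum_i (i == s)%:R * f i = f s.
Proof.
rewrite (bigD1 s) //= eqxx mul1r big1 ?addr0 // => i /negbTE ->.
by rewrite mul0r.
Qed.

Lemma lap_mul (R : realType) (n : nat) (adj : rel 'I_n) (y : 'cV[R]_n) i :
  (laplacian R adj *m y) i 0 = Lf adj (fun j => y j 0) i.
Proof.
rewrite mxE /Lf.
have -> : \sum_j laplacian R adj i j * y j 0 =
   \sum_j ((j == i)%:R * ((deg adj i)%:R * y j 0) - (adj i j)%:R * y j 0).
  apply: eq_bigr => j _; rewrite mxE eq_sym.
  by case: eqP => _ /=; ring.
rewrite sumrB sum_ind degE mulr_suml -sumrB.
by apply: eq_bigr => j _; ring.
Qed.

Lemma sum_pos_eq0 (R : realType) (n : nat) (F : 'I_n -> 'I_n -> R) :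
  (forall i j, 0 <= F i j) -> \sum_i \sum_j F i j = 0 -> forall i j, F i j = 0.
Proof.
move=> F0 H i j.
have Hi : \sum_j F i j = 0.
  have P0 : forall k, xpredT k -> 0 <= \sum_j F k j.
    by move=> k _; apply: sumr_ge0 => l _.
  exact: (@psumr_eq0P _ _ xpredT (fun i => \sum_j F i j) P0 H i isT).
have P1 : forall k, xpredT k -> 0 <= F i k by [].
exact: (@psumr_eq0P _ _ xpredT (fun j => F i j) P1 Hi j isT).
Qed.

Lemma ker_edge (R : realType) (n : nat) (adj : rel 'I_n) (k : 'I_n -> R) :
  symmetric adj -> (forall i, Lf adj k i = 0) -> forall i j, adj i j -> k i = k j.
Proof.
move=> sym H.
have : bil adj k k = 0.
  have := bilE k k sym.
  rewrite big1 => [|i _]; last by rewrite H mulr0.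
  by move=> /esym /eqP; rewrite mulf_eq0 invr_eq0 pnatr_eq0 orbF => /eqP.
move=> /(sum_pos_eq0 _) H2 i j aij.
have Hpos : forall i j, 0 <= (adj i j)%:R * ((k i - k j) * (k i - k j)).
  by move=> i' j'; apply: mulr_ge0 => //; rewrite -expr2 sqr_ge0.
have := H2 Hpos i j; rewrite aij mul1r => /eqP.
by rewrite mulf_eq0 orbb subr_eq0 => /eqP.
Qed.

Lemma trmx_entry (R : realType) (n : nat) (u v : 'cV[R]_n) :
  (u^T *m v) 0 0 = \sum_i u i 0 * v i 0.
Proof. by rewrite mxE; apply: eq_bigr => i _; rewrite mxE. Qed.

Lemma sumsq_eq0 (R : realType) (n : nat) (f : 'I_n -> R) :
  \sum_i f i * f i = 0 -> forall i, f i = 0.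
Proof.
move=> H i.
have P0 : forall k, xpredT k -> 0 <= f k * f k by move=> k _; rewrite -expr2 sqr_ge0.
have := @psumr_eq0P _ _ xpredT (fun i => f i * f i) P0 H i isT.
by move/eqP; rewrite mulf_eq0 orbb => /eqP.
Qed.

Lemma facts (R : realType) (n : nat) (adj : rel 'I_n) (s t : 'I_n) (X : 'M[R]_n) :
  simple_graph adj -> adj s t -> is_pinv (laplacian R adj) X ->
  let xf := fun i => (X *m (ind R s - ind R t)) i 0 in
  [/\ forall i, Lf adj xf i = (i == s)%:R - (i == t)%:R,
      forall kf : 'I_n -> R, (forall i j, adj i j -> kf i = kf j) ->
         \sum_i kf i * xf i = 0 &
      biharmonic X s t ^+ 2 = \sum_i xf i * xf i].
Proof.
move=> [sym irr] ast hX xf.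
set L := laplacian R adj.
have sL : L^T = L := lap_sym R sym.
have sX : X^T = X := pinv_sym sL hX.
case: hX => [X1 X2 X3 X4].
have LX : L *m X = X *m L by rewrite -X3 trmx_mul sX sL.
have LLX : L *m L *m X = L by rewrite -mulmxA LX mulmxA X1.
set b := ind R s - ind R t.
have bE : forall i, b i 0 = (i == s)%:R - (i == t)%:R by move=> i; rewrite !mxE.
have kerO : forall kc : 'cV[R]_n, L *m kc = 0 -> kc^T *m X = 0.
  move=> kc Lk.
  have XL : X *m L = L *m X^T by rewrite -X4 trmx_mul sL.
  by rewrite -X2 mulmxA XL mulmxA -{1}sL -trmx_mul Lk trmx0 !mul0mx.
have edgeL : forall kf : 'I_n -> R, (forall i j, adj i j -> kf i = kf j) ->
    L *m (\col_i kf i) = 0.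
  move=> kf Hk; apply/matrixP => i j; rewrite ord1 lap_mul mxE /Lf big1 // => k _.
  rewrite !mxE; case E: (adj i k); last by rewrite mul0r.
  by rewrite (Hk _ _ E) subrr mulr0.
split.
- set w := b - L *m (X *m b).
  have Lw : L *m w = 0 by rewrite mulmxBr !mulmxA LLX subrr.
  have wst : w s 0 = w t 0.
    apply: (ker_edge (k := fun j => w j 0) sym) => // i.
    by rewrite -lap_mul Lw mxE.
  have ww : (w^T *m w) 0 0 = 0.
    have -> : w^T *m w = w^T *m b - w^T *m L *m (X *m b).
      by rewrite -mulmxA -mulmxBr.
    have -> : w^T *m L = 0 by rewrite -{1}sL -trmx_mul Lw trmx0.
    rewrite mul0mx subr0 trmx_entry.
    under eq_bigr do rewrite bE mulrBr.
    rewrite sumrB.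
    under eq_bigr do rewrite mulrC.
    rewrite sum_ind.
    under [X in _ - X]eq_bigr do rewrite mulrC.
    by rewrite sum_ind wst subrr.
  rewrite trmx_entry in ww.
  have w0 := sumsq_eq0 ww.
  move=> i; rewrite /xf -lap_mul -bE.
  by have := w0 i; rewrite !mxE => /eqP; rewrite subr_eq0 => /eqP <-.
- move=> kf Hk.
  have := kerO _ (edgeL kf Hk) => /(congr1 (fun M => (M *m b) 0 0)).
  rewrite mul0mx => H.
  have H' : ((\col_i kf i)^T *m (X *m b)) 0 0 = 0 by rewrite mulmxA H mxE.
  rewrite trmx_entry in H'; rewrite -[RHS]H'.
  by apply: eq_bigr => i _; rewrite mxE.
- rewrite /biharmonic sqr_sqrtr.
    by rewrite -{1}sX -mulmxA -mulmxA mulmxA -trmx_mul trmx_entry.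
  rewrite -{1}sX -mulmxA -mulmxA mulmxA -trmx_mul trmx_entry.
  by apply: sumr_ge0 => i _; rewrite -expr2 sqr_ge0.
Qed.

Lemma cutE (R : realType) (n : nat) (adj : rel 'I_n) (S : {set 'I_n}) :
  (cut_size adj S)%:R = \sum_i \sum_j ([&& i \in S, j \notin S & adj i j])%:R :> R.
Proof.
rewrite /cut_size -sum1dep_card natr_sum big_mkcond /=.
rewrite (pair_bigA _ (fun i j => ([&& i \in S, j \notin S & adj i j])%:R)).
by apply: eq_bigr => p _; case: ifP.
Qed.

Lemma card_setR (R : realType) (n : nat) (P : pred 'I_n) :
  (#|[set v | P v]|)%:R = \sum_i (P i)%:R :> R.
Proof.
rewrite -sum1dep_card natr_sum big_mkcond /=.
by apply: eq_bigr => i _; case: (P i).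
Qed.

Definition Sth (R : realType) (n : nat) (a : 'I_n -> R) (th : R) : {set 'I_n} :=
  [set v | th <= a v].

Definition Dsum (R : realType) (n : nat) (adj : rel 'I_n) (a : 'I_n -> R) : R :=
  \sum_i \sum_j (adj i j)%:R * Num.max (a i - a j) 0.

Lemma sweep (R : realType) (n : nat) (adj : rel 'I_n) (al be : R) (m : nat) :
  forall a : 'I_n -> R,
  (#|[set v | (0 < a v)%R]| <= m)%N ->
  0 <= al -> 0 <= be -> (forall v, 0 <= a v) ->
  (forall v, 0 < a v -> al * #|Sth a (a v)|%:R < be * (cut_size adj (Sth a (a v)))%:R) ->
  (exists v, 0 < a v) ->
  al * \sum_i a i < be * Dsum adj a.
Proof.
elim: m => [|m IH] a Hm al0 be0 a0 Hth [v0 av0].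
  move: Hm; rewrite leqn0 => /eqP /cards0_eq /setP /(_ v0).
  by rewrite inE in_set0 av0.
pose W := [pred i | 0 < a i].
pose i0 := [arg min_(i < v0 | W i) a i]%O.
have [m0pos m0min] : 0 < a i0 /\ forall j, 0 < a j -> a i0 <= a j.
  rewrite /i0; case: arg_minP => //= i Wi Hi; split => // j; exact: Hi.
set m0 := a i0 in m0pos m0min.
pose a' := fun i => Num.max (a i - m0) 0.
have posE : forall i, (0 < a i) = (m0 <= a i).
  move=> i; apply/idP/idP => [/m0min //|h]; exact: lt_le_trans m0pos h.
have f1 : forall i, a i = a' i + m0 * ((m0 <= a i)%R)%:R.
  move=> i; rewrite /a'; case: (leP m0 (a i)) => h /=.
    by rewrite max_l ?subr_ge0 //; ring.
  have ai0 : a i = 0.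
    by apply/eqP; rewrite eq_le a0 andbT leNgt posE -ltNge.
  by rewrite max_r ai0 ?subr_le0 ?ltW // -ai0; ring.
have a'0 : forall i, 0 <= a' i by move=> i; rewrite /a' le_max lexx orbT.
have f2 : \sum_i a i = \sum_i a' i + m0 * #|Sth a m0|%:R.
  rewrite /Sth card_setR mulr_sumr -big_split /=.
  by apply: eq_bigr => i _; rewrite -f1.
have f3 : forall i j, Num.max (a i - a j) 0 = Num.max (a' i - a' j) 0
      + m0 * ([&& i \in Sth a m0, j \notin Sth a m0 & true])%:R.
  move=> i j; rewrite /Sth !inE andbT -!posE.
  case: (ltrP 0 (a i)) => hi; case: (ltrP 0 (a j)) => hj /=.
  - have -> : a' i - a' j = a i - a j.
      by rewrite /a' !max_l ?subr_ge0 -?posE ?(ltW hi) ?(ltW hj) //; ring.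
    by rewrite mulr0 addr0.
  - have ej : a j = 0 by apply/eqP; rewrite eq_le hj a0.
    have e'j : a' j = 0 by rewrite /a' max_r // ej sub0r oppr_le0 ltW.
    rewrite e'j ej subr0 /a' !max_l ?subr_ge0 -?posE ?(ltW hi) //; ring.
  - have ei : a i = 0 by apply/eqP; rewrite eq_le hi a0.
    have e'i : a' i = 0 by rewrite /a' max_r // ei sub0r oppr_le0 ltW.
    rewrite e'i ei !sub0r mulr0 addr0 !max_r // oppr_le0 ?a0 //.
  - have ei : a i = 0 by apply/eqP; rewrite eq_le hi a0.
    have e'i : a' i = 0 by rewrite /a' max_r // ei sub0r oppr_le0 ltW.
    rewrite e'i ei !sub0r mulr0 addr0 !max_r // oppr_le0 ?a0 //.
have f4 : Dsum adj a = Dsum adj a' + m0 * (cut_size adj (Sth a m0))%:R.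
  rewrite cutE mulr_sumr /Dsum -big_split; apply: eq_bigr => i _ /=.
  rewrite mulr_sumr -big_split; apply: eq_bigr => j _ /=.
  rewrite f3 mulrDr; congr (_ + _).
  by case: (adj i j); rewrite ?andbT ?andbF ?mul1r ?mul0r ?mulr0.
have f5 : forall v, 0 < a' v -> Sth a' (a' v) = Sth a (a v).
  move=> v; rewrite /a' lt_max ltxx orbF subr_gt0 => hv.
  apply/setP => u; rewrite !inE max_l ?subr_ge0 ?(ltW hv) //.
  rewrite le_max lerD2r.
  have -> : (a v - m0 <= 0) = false by apply/negbTE; rewrite -ltNge subr_gt0.
  by rewrite orbF.
have f6 : (#|[set v | (0 < a' v)%R]| <= m)%N.
  rewrite -ltnS; apply: leq_trans Hm; apply: proper_card; apply/properP; split.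
    apply/subsetP => u; rewrite !inE /a' lt_max ltxx orbF subr_gt0 => h.
    exact: lt_trans m0pos h.
  exists i0; first by rewrite inE.
  by rewrite inE /a' lt_max ltxx orbF subrr ltxx.
have Hi0 := Hth i0 m0pos.
have Hrest : al * \sum_i a' i <= be * Dsum adj a'.
  case: (boolP [exists v, 0 < a' v]) => [/existsP [v hv]|].
    apply: ltW; apply: IH => // [v' hv'|]; last by exists v.
    rewrite f5 //; apply: Hth.
    move: hv'; rewrite /a' lt_max ltxx orbF subr_gt0 => h; exact: lt_trans m0pos h.
  rewrite negb_exists => /forallP H0.
  have z : forall i, a' i = 0.
    by move=> i; apply/eqP; rewrite eq_le a'0 andbT leNgt H0.
  rewrite /Dsum !big1 ?mulr0 // => i _; rewrite ?z //.
  by rewrite big1 // => j _; rewrite !z subrr maxxx mulr0.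
rewrite f2 f4 !mulrDr.
have : al * (m0 * #|Sth a m0|%:R) < be * (m0 * (cut_size adj (Sth a m0))%:R).
  by rewrite mulrCA [be * _]mulrCA ltr_pM2l.
move: Hrest; lra.
Qed.

Lemma term_bound (R : realType) (x y l : R) : 0 <= x -> 0 <= y -> 0 < l ->
  2 * l * Num.max (x * x - y * y) 0 <= l ^+ 2 * ((x - y) * (x - y)) + 2 * (x * x + y * y).
Proof.
move=> x0 y0 l0; case: (leP (x * x - y * y) 0) => h.
  rewrite mulr0.
  apply: addr_ge0; first by apply: mulr_ge0; [exact: sqr_ge0 | rewrite -expr2 sqr_ge0].
  by apply: mulr_ge0 => //; apply: addr_ge0; rewrite -expr2 sqr_ge0.

have := sqr_ge0 (l * (x - y) - (x + y)); rewrite expr2 => H.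
nra.
Qed.

Lemma deg_sum (R : realType) (n : nat) (adj : rel 'I_n) (f : 'I_n -> R) :
  symmetric adj -> (forall i, 0 <= f i) ->
  \sum_i \sum_j (adj i j)%:R * (f i + f j) <= 2 * (dmax adj)%:R * \sum_i f i.
Proof.
move=> sym f0.
have -> : \sum_i \sum_j (adj i j)%:R * (f i + f j) = 2 * \sum_i (deg adj i)%:R * f i.
  have E : \sum_i \sum_j (adj i j)%:R * f j = \sum_i \sum_j (adj i j)%:R * f i.
    rewrite exchange_big; apply: eq_bigr => i _; apply: eq_bigr => j _.
    by rewrite sym.
  have -> : \sum_i \sum_j (adj i j)%:R * (f i + f j) =
     \sum_i \sum_j (adj i j)%:R * f i + \sum_i \sum_j (adj i j)%:R * f j.
    rewrite -big_split; apply: eq_bigr => i _; rewrite -big_split.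
    by apply: eq_bigr => j _; rewrite mulrDr.
  rewrite E; under eq_bigr do rewrite -mulr_suml -degE.
  by ring.
rewrite -mulrA ler_pM2l // mulr_sumr; apply: ler_sum => i _.
apply: ler_wpM2r => //; rewrite ler_nat.
exact: (@leq_bigmax _ (deg adj) i).
Qed.

Lemma Dbound (R : realType) (n : nat) (adj : rel 'I_n) (p : 'I_n -> R) :
  symmetric adj -> (forall i, 0 <= p i) -> bil adj p p <= 2 ->
  Dsum adj (fun i => p i * p i) ^+ 2 <= 8 * (dmax adj)%:R * \sum_i p i * p i.
Proof.
move=> sym p0 hb.
set D := Dsum adj _; set P := \sum_i _.
have D0 : 0 <= D.
  apply: sumr_ge0 => i _; apply: sumr_ge0 => j _; apply: mulr_ge0 => //.
  by rewrite le_max lexx orbT.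
have P0 : 0 <= P by apply: sumr_ge0 => i _; rewrite -expr2 sqr_ge0.
have dm0 : 0 <= (dmax adj)%:R :> R by [].
have key : forall l, 0 < l -> 2 * l * D <= l ^+ 2 * 2 + 4 * (dmax adj)%:R * P.
  move=> l l0.
  have H1 : 2 * l * D <= l ^+ 2 * bil adj p p +
       \sum_i \sum_j (adj i j)%:R * (2 * (p i * p i + p j * p j)).
    rewrite /D /Dsum /bil !mulr_sumr -big_split; apply: ler_sum => i _.
    rewrite !mulr_sumr -big_split; apply: ler_sum => j _ /=.
    case: (adj i j); last by rewrite !mul0r !mulr0 addr0.
    by rewrite !mul1r; apply: term_bound.
  have H2 : \sum_i \sum_j (adj i j)%:R * (2 * (p i * p i + p j * p j))
      <= 4 * (dmax adj)%:R * P.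
    have := @deg_sum _ _ _ (fun i => p i * p i) sym (fun i => mulr_ge0 (p0 i) (p0 i)).
    have -> : \sum_i \sum_j (adj i j)%:R * (2 * (p i * p i + p j * p j)) =
       2 * \sum_i \sum_j (adj i j)%:R * (p i * p i + p j * p j).
      rewrite mulr_sumr; apply: eq_bigr => i _; rewrite mulr_sumr.
      by apply: eq_bigr => j _; ring.
    rewrite -/P => H; nra.
  have H3 : l ^+ 2 * bil adj p p <= l ^+ 2 * 2 by rewrite ler_wpM2l // sqr_ge0.
  lra.
have [->|Dn0] := eqVneq D 0.
  by rewrite expr2 mulr0; apply: mulr_ge0 => //; apply: mulr_ge0.
have Dp : 0 < D by rewrite lt_def Dn0 D0.
have := key (D / 2) ltac:(by apply: divr_gt0).
move=> H; nra.
Qed.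

Lemma sq_le (R : realType) (u v : R) : 0 <= u -> u <= v -> u ^+ 2 <= v ^+ 2.
Proof. by move=> u0 uv; rewrite !expr2; apply: ler_pM. Qed.

Lemma half_sweep (R : realType) (n : nat) (adj : rel 'I_n) (s t : 'I_n) (p : 'I_n -> R) :
  symmetric adj -> s != t ->
  (forall i, 0 <= p i) -> bil adj p p <= 2 ->
  (2 * #|[set v | (0 < p v)%R]| <= n)%N -> p t = 0 -> (forall i, p i <= p s) ->
  exists S : {set 'I_n}, [/\ s \in S, t \notin S &
    (\sum_i p i * p i) * (n%:R ^+ 2 * (cut_size adj S)%:R ^+ 2)
      <= 32 * (dmax adj)%:R * (#|S|%:R ^+ 2 * #|~: S|%:R ^+ 2)].
Proof.
move=> sym st p0 hb hcard pt ps.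
set P := \sum_i _.
have P0 : 0 <= P by apply: sumr_ge0 => i _; rewrite -expr2 sqr_ge0.
have rhs0 : forall S : {set 'I_n}, 0 <= 32 * (dmax adj)%:R * (#|S|%:R ^+ 2 * #|~: S|%:R ^+ 2) :> R.
  move=> S; apply: mulr_ge0; first by apply: mulr_ge0.
  by apply: mulr_ge0; apply: exprn_ge0.
have [P00|Pn0] := eqVneq P 0.
  exists [set s]; split; rewrite ?inE ?eqxx // 1?eq_sym //.
  by rewrite P00 mul0r.
have Ppos : 0 < P by rewrite lt_def Pn0 P0.
pose a := fun i => p i * p i.
have a0 : forall i, 0 <= a i by move=> i; rewrite /a -expr2 sqr_ge0.
have sumaP : \sum_i a i = P by [].
have exa : exists v, 0 < a v.
  case: (boolP [exists v, 0 < a v]) => [/existsP [v hv]|]; first by exists v.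
  rewrite negb_exists => /forallP H0.
  have : P <= 0.
    rewrite -sumaP; apply: sumr_le0 => i _; rewrite leNgt; exact: H0.
  by rewrite leNgt Ppos.
set D := Dsum adj a.
have D0 : 0 <= D.
  apply: sumr_ge0 => i _; apply: sumr_ge0 => j _; apply: mulr_ge0 => //.
  by rewrite le_max lexx orbT.
case: (boolP [exists v, (0 < a v) && (P * (cut_size adj (Sth a (a v)))%:R <= D * #|Sth a (a v)|%:R)]).
  move=> /existsP [v /andP [av hv]].
  set S := Sth a (a v) in hv *.
  have sS : s \in S.
    rewrite inE /a; apply: ler_pM => //; exact: ps.
  have tS : t \notin S by rewrite inE /a pt mul0r -ltNge.
  exists S; split => //.
  have Ssub : S \subset [set v | (0 < p v)%R].
    apply/subsetP => u; rewrite !inE => h.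
    have : 0 < a u := lt_le_trans av h.
    rewrite /a lt_def => /andP [].
    rewrite mulf_eq0 orbb => pu _; rewrite lt_def pu; exact: p0.
  have hS : (2 * #|S| <= n)%N := leq_trans (leq_mul (leqnn 2) (subset_leq_card Ssub)) hcard.
  have hSc : (n <= 2 * #|~: S|)%N.
    have := cardsC S; rewrite card_ord => e; lia.
  have hScR : n%:R <= 2 * #|~: S|%:R :> R by rewrite -natrM ler_nat.
  have DB := Dbound sym p0 hb.
  rewrite -/P -/D in DB.
  set c := (cut_size adj S)%:R in hv *.
  set k := #|S|%:R in hv *.
  set kc := #|~: S|%:R in hScR *.
  have c0 : 0 <= c by [].
  have k0 : 0 <= k by [].
  have n0 : 0 <= n%:R :> R by [].
  have H1 : P ^+ 2 * c ^+ 2 <= D ^+ 2 * k ^+ 2.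
    by rewrite -!exprMn; apply: sq_le => //; apply: mulr_ge0.
  have H2 : P * c ^+ 2 <= 8 * (dmax adj)%:R * k ^+ 2.
    have H3 : P * (P * c ^+ 2) <= P * (8 * (dmax adj)%:R * k ^+ 2).
      have H5 := ler_wpM2r (exprn_ge0 2 k0) DB.
      have -> : P * (P * c ^+ 2) = P ^+ 2 * c ^+ 2 by ring.
      have -> : P * (8 * (dmax adj)%:R * k ^+ 2) = 8 * (dmax adj)%:R * P * k ^+ 2 by ring.
      exact: le_trans H1 H5.
    by rewrite ler_pM2l in H3.
  have H4 : n%:R ^+ 2 <= 4 * kc ^+ 2.
    have -> : 4 * kc ^+ 2 = (2 * kc) ^+ 2 by ring.
    by apply: sq_le.
  have dm0 : 0 <= (dmax adj)%:R :> R by [].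
  have H6 := ler_wpM2r (exprn_ge0 2 n0) H2.
  have H7 : 8 * (dmax adj)%:R * k ^+ 2 * n%:R ^+ 2 <= 8 * (dmax adj)%:R * k ^+ 2 * (4 * kc ^+ 2).
    apply: ler_wpM2l => //; apply: mulr_ge0 => //; [exact: mulr_ge0 | exact: exprn_ge0].
  have -> : P * (n%:R ^+ 2 * c ^+ 2) = P * c ^+ 2 * n%:R ^+ 2 by ring.
  have -> : 32 * (dmax adj)%:R * (k ^+ 2 * kc ^+ 2) = 8 * (dmax adj)%:R * k ^+ 2 * (4 * kc ^+ 2) by ring.
  exact: le_trans H6 H7.
rewrite negb_exists => /forallP H0.
have : D * \sum_i a i < P * D.
  apply: (sweep (m := #|[set v | (0 < a v)%R]|)) => // v av.
  have := H0 v; rewrite av /= -ltNge => h; exact: h.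
by rewrite sumaP mulrC ltxx.
Qed.

Lemma median (R : realType) (n : nat) (f : 'I_n -> R) (v0 : 'I_n) :
  exists w, (2 * #|[set v | (f w < f v)%R]| <= n)%N /\ (2 * #|[set v | (f v < f w)%R]| <= n)%N.
Proof.
pose w1 := [arg max_(i > v0) f i]%O.
have W1 : forall j, f j <= f w1.
  by rewrite /w1; case: arg_maxP => //= i _ H j; apply: H.
pose W := [pred w | (2 * #|[set v | (f w < f v)%R]| <= n)%N].
have Ww1 : W w1.
  rewrite /W /= (_ : [set v | f w1 < f v] = set0) ?cards0 //.
  by apply/setP => v; rewrite !inE ltNge W1.
pose w := [arg min_(i < w1 | W i) f i]%O.
have [Ww Hmin] : W w /\ forall j, W j -> f w <= f j.
  by rewrite /w; case: arg_minP => //= i Wi H; split => // j; apply: H.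
exists w; split => //.
rewrite leqNgt; apply/negP => hL.
set L := [set v | f v < f w] in hL.
have : (0 < #|L|)%N by lia.
rewrite card_gt0 => /set0Pn [u0 u0L].
pose w' := [arg max_(i > u0 in L) f i]%O.
have [Lw' Hmax] : w' \in L /\ forall j, j \in L -> f j <= f w'.
  by rewrite /w'; case: arg_maxP => //= i Li H; split => // j; apply: H.
have Ww' : W w'.
  rewrite /W /=.
  have sub : [set v | f w' < f v] \subset ~: L.
    apply/subsetP => v; rewrite !inE => h; apply/negP => hv.
    by have := Hmax v; rewrite inE => /(_ hv); rewrite leNgt h.
  have := subset_leq_card sub; have := cardsC L; rewrite card_ord. set x := #|~: L|. set y := #|L|. set z := #|[set v | (f w' < f v)%R]|. move=> e1 e2; move: hL e1 e2; clear; rewrite -/y; clearbody x y z; lia.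
have := Hmin w' Ww'; move: Lw'; rewrite inE => h1 h2.
by have := lt_le_trans h1 h2; rewrite ltxx.
Qed.

Lemma max_lip (R : realType) (lo a b : R) :
  (Num.max a lo - Num.max b lo) * (Num.max a lo - Num.max b lo) <= (a - b) * (a - b).
Proof.
case: (leP a lo) => h1; case: (leP b lo) => h2;
  first [ by rewrite subrr mul0r -expr2 sqr_ge0 | by rewrite lexx | nra ].
Qed.

Lemma min_lip (R : realType) (hi a b : R) :
  (Num.min a hi - Num.min b hi) * (Num.min a hi - Num.min b hi) <= (a - b) * (a - b).
Proof.
case: (leP a hi) => h1; case: (leP b hi) => h2;
  first [ by rewrite subrr mul0r -expr2 sqr_ge0 | by rewrite lexx | nra ].
Qed.

Definition clamp (R : realType) (lo hi x : R) := Num.min (Num.max x lo) hi.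

Lemma clamp_lip (R : realType) (lo hi a b : R) :
  (clamp lo hi a - clamp lo hi b) * (clamp lo hi a - clamp lo hi b) <= (a - b) * (a - b).
Proof. exact: le_trans (min_lip _ _ _) (max_lip _ _ _). Qed.

Lemma sum2_ge (R : realType) (n : nat) (F : 'I_n -> 'I_n -> R) (s t : 'I_n) :
  (forall i j, 0 <= F i j) -> s != t -> F s t + F t s <= \sum_i \sum_j F i j.
Proof.
move=> F0 st.
have row : forall i j, F i j <= \sum_k F i k.
  by move=> i j; rewrite (bigD1 j) //= lerDl; apply: sumr_ge0.
rewrite (bigD1 s) //=; apply: lerD; first exact: row.
rewrite (bigD1 t) /=; last by rewrite eq_sym.
apply: le_trans (row t s) _; rewrite lerDl.
by apply: sumr_ge0 => i _; apply: sumr_ge0.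
Qed.

Lemma bil_ge0 (R : realType) (n : nat) (adj : rel 'I_n) (k : 'I_n -> R) :
  0 <= bil adj k k.
Proof.
apply: sumr_ge0 => i _; apply: sumr_ge0 => j _; apply: mulr_ge0 => //.
by rewrite -expr2 sqr_ge0.
Qed.

Lemma edge_of_bil0 (R : realType) (n : nat) (adj : rel 'I_n) (k : 'I_n -> R) :
  bil adj k k = 0 -> forall i j, adj i j -> k i = k j.
Proof.
move=> /(sum_pos_eq0 _) H2 i j aij.
have Hpos : forall i j, 0 <= (adj i j)%:R * ((k i - k j) * (k i - k j)).
  by move=> i' j'; apply: mulr_ge0 => //; rewrite -expr2 sqr_ge0.
have := H2 Hpos i j; rewrite aij mul1r => /eqP.
by rewrite mulf_eq0 orbb subr_eq0 => /eqP.
Qed.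

Lemma bil_add (R : realType) (n : nat) (adj : rel 'I_n) (x k : 'I_n -> R) :
  bil adj (fun i => x i + k i) (fun i => x i + k i) = bil adj x x + 2 * bil adj k x + bil adj k k.
Proof.
rewrite /bil.
have -> : \sum_i \sum_j (adj i j)%:R * ((x i + k i - (x j + k j)) * (x i + k i - (x j + k j)))
  = \sum_i \sum_j ((adj i j)%:R * ((x i - x j) * (x i - x j)) +
       2 * ((adj i j)%:R * ((k i - k j) * (x i - x j))) + (adj i j)%:R * ((k i - k j) * (k i - k j))).
  by apply: eq_bigr => i _; apply: eq_bigr => j _; ring.
under eq_bigr do rewrite big_split /= big_split /=.
rewrite big_split /= big_split /= mulr_sumr.
by congr (_ + _ + _); apply: eq_bigr => i _; rewrite -mulr_sumr.
Qed.

Lemma cut_compl (R : realType) (n : nat) (adj : rel 'I_n) (S : {set 'I_n}) :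
  symmetric adj -> cut_size adj (~: S) = cut_size adj S.
Proof.
move=> sym; apply/eqP; rewrite -(eqr_nat R) !cutE exchange_big; apply/eqP.
apply: eq_bigr => i _; apply: eq_bigr => j _.
by rewrite !inE negbK sym; case: (i \in S); case: (j \in S); rewrite ?andbF.
Qed.

Lemma finish (R : realType) (n : nat) (adj : rel 'I_n) (S : {set 'I_n}) (X : R) :
  (0 < #|S|)%N -> (0 < #|~: S|)%N -> (0 < cut_size adj S)%N -> (0 < n)%N ->
  X * (n%:R ^+ 2 * (cut_size adj S)%:R ^+ 2) <= 64 * (dmax adj)%:R * (#|S|%:R ^+ 2 * #|~: S|%:R ^+ 2) ->
  X <= 64 * (dmax adj)%:R / iso_ratio R adj S ^+ 2.
Proof.
move=> hk hkc hc hn H.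
rewrite /iso_ratio !natrM.
set k := #|S|%:R; set kc := #|~: S|%:R; set c := (cut_size adj S)%:R.
have k0 : 0 < k by rewrite ltr0n.
have kc0 : 0 < kc by rewrite ltr0n.
have c0 : 0 < c by rewrite ltr0n.
have n0 : 0 < n%:R :> R by rewrite ltr0n.
have -> : 64 * (dmax adj)%:R / ((n%:R * c) / (k * kc)) ^+ 2
   = 64 * (dmax adj)%:R * (k ^+ 2 * kc ^+ 2) / (n%:R ^+ 2 * c ^+ 2).
  field; rewrite ?mulf_neq0 ?gt_eqF //.
rewrite ler_pdivlMr //; apply: mulr_gt0; exact: exprn_gt0.
Qed.

Theorem theorem5p4 (R : realType) :
  exists C : R, 0 < C /\
  forall (n : nat) (adj : rel 'I_n) (s t : 'I_n) (Lp : 'M[R]_n),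
    simple_graph adj ->
    adj s t ->
    is_pinv (laplacian R adj) Lp ->
    exists S : {set 'I_n},
      [/\ s \in S, t \notin S &
          biharmonic Lp s t ^+ 2 <= C * (dmax adj)%:R / iso_ratio R adj S ^+ 2].
Proof.
exists 64; split => // n adj s t X sg ast hX.
have [sym irr] := sg.
have st : s != t by apply/negP => /eqP e; move: ast; rewrite e irr.
have [x [fL fK fB]] : exists x : 'I_n -> R,
   [/\ forall i, Lf adj x i = (i == s)%:R - (i == t)%:R,
      forall kf : 'I_n -> R, (forall i j, adj i j -> kf i = kf j) ->
         \sum_i kf i * x i = 0 &
      biharmonic X s t ^+ 2 = \sum_i x i * x i].
  by exists (fun i => (X *m (ind R s - ind R t)) i 0); apply: facts.
rewrite fB.
have lin : forall k : 'I_n -> R, \sum_i k i * Lf adj x i = k s - k t.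
  move=> k; under eq_bigr do rewrite fL mulrBr.
  rewrite sumrB; under eq_bigr do rewrite mulrC.
  rewrite sum_ind; under [X in _ - X]eq_bigr do rewrite mulrC.
  by rewrite sum_ind.
set r := x s - x t.
have bxx : bil adj x x = 2 * r.
  by have := bilE x x sym; rewrite lin -/r => ->; field.
have r2 : 2 * (r * r) <= bil adj x x.
  have := @sum2_ge _ _ (fun i j => (adj i j)%:R * ((x i - x j) * (x i - x j))) s t _ st.
  rewrite ast sym ast !mul1r /r => H; apply: le_trans (H _).
    by rewrite mulr2n; lra.
  by move=> i j; apply: mulr_ge0 => //; rewrite -expr2 sqr_ge0.
rewrite bxx in r2.
have r0 : 0 <= r by have := sqr_ge0 r; rewrite expr2; lra.
have r1 : r <= 1.
  case: (leP r 1) => // h.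
  have : r * 1 < r * r by rewrite ltr_pM2l //; lra.
  lra.
set lo := x t; set hi := x s.
have lohi : lo <= hi by rewrite -subr_ge0.
pose z := fun i => clamp lo hi (x i).
have zs : z s = hi by rewrite /z /clamp max_l // min_l.
have zt : z t = lo by rewrite /z /clamp max_l // min_l.
have zlo : forall i, lo <= z i.
  by move=> i; rewrite /z /clamp le_min le_max lexx orbT lohi.
have zhi : forall i, z i <= hi by move=> i; rewrite /z /clamp ge_min lexx orbT.
have bzz : bil adj z z <= bil adj x x.
  apply: ler_sum => i _; apply: ler_sum => j _; apply: ler_wpM2l => //.
  exact: clamp_lip.
pose k := fun i => z i - x i.
have zE : bil adj z z = bil adj (fun i => x i + k i) (fun i => x i + k i).
  rewrite /bil /k; apply: eq_bigr => i _; apply: eq_bigr => j _; congr (_ * _); ring.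
have bkx : bil adj k x = 0.
  have := bilE k x sym; rewrite lin /k zs zt /hi /lo !subrr => /esym /eqP.
  by rewrite mulf_eq0 invr_eq0 pnatr_eq0 orbF => /eqP.
have bkk : bil adj k k = 0.
  apply/eqP; rewrite eq_le bil_ge0 andbT.
  by move: bzz; rewrite zE bil_add bkx mulr0 addr0 gerDl.
have kedge := edge_of_bil0 bkk.
have xle : forall c, \sum_i x i * x i <= \sum_i (z i - c) * (z i - c).
  move=> c.
  have hk : forall i j, adj i j -> k i - c = k j - c by move=> i j h; rewrite (kedge i j h).
  have o := fK (fun i => k i - c) hk.
  have -> : \sum_i (z i - c) * (z i - c) = \sum_i x i * x i
       + 2 * \sum_i (k i - c) * x i + \sum_i (k i - c) * (k i - c).
    rewrite mulr_sumr -!big_split /=; apply: eq_bigr => i _; rewrite /k; ring.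
  by rewrite o mulr0 addr0 lerDl; apply: sumr_ge0 => i _; rewrite -expr2 sqr_ge0.
have [w [m1 m2]] := median z s.
set c := z w in m1 m2.
have clo : lo <= c := zlo w.
have chi : c <= hi := zhi w.
pose p := fun i => Num.max (z i - c) 0.
pose q := fun i => Num.max (c - z i) 0.
have p0 : forall i, 0 <= p i by move=> i; rewrite /p le_max lexx orbT.
have q0 : forall i, 0 <= q i by move=> i; rewrite /q le_max lexx orbT.
have bz2 : bil adj z z <= 2 by apply: (le_trans bzz); rewrite bxx; lra.
have bpp : bil adj p p <= 2.
  apply: le_trans bz2; apply: ler_sum => i _; apply: ler_sum => j _; apply: ler_wpM2l => //.
  have := max_lip 0 (z i - c) (z j - c).
  by have -> : z i - c - (z j - c) = z i - z j by ring.
have bqq : bil adj q q <= 2.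
  apply: le_trans bz2; apply: ler_sum => i _; apply: ler_sum => j _; apply: ler_wpM2l => //.
  have := max_lip 0 (c - z i) (c - z j).
  have -> : c - z i - (c - z j) = z j - z i by ring.
  by have -> : (z j - z i) * (z j - z i) = (z i - z j) * (z i - z j) by ring.
have cp : (2 * #|[set v | (0 < p v)%R]| <= n)%N.
  rewrite (_ : [set v | (0 < p v)%R] = [set v | (c < z v)%R]) //.
  by apply/setP => v; rewrite !inE /p lt_max ltxx orbF subr_gt0.
have cq : (2 * #|[set v | (0 < q v)%R]| <= n)%N.
  rewrite (_ : [set v | (0 < q v)%R] = [set v | (z v < c)%R]) //.
  by apply/setP => v; rewrite !inE /q lt_max ltxx orbF subr_gt0.
have pt : p t = 0 by rewrite /p zt max_r // subr_le0.
have qs : q s = 0 by rewrite /q zs max_r // subr_le0.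
have ps : forall i, p i <= p s.
  by move=> i; rewrite /p zs ge_max !le_max lerD2r zhi lexx !orbT.
have qt : forall i, q i <= q t.
  by move=> i; rewrite /q zt ge_max !le_max lerD2l lerN2 zlo lexx !orbT.
have ts : t != s by rewrite eq_sym.
have [S1 [s1 t1 h1]] := @half_sweep _ _ _ s t p sym st p0 bpp cp pt ps.
have [S2 [t2 s2 h2]] := @half_sweep _ _ _ t s q sym ts q0 bqq cq qs qt.
have xPQ : \sum_i x i * x i <= \sum_i p i * p i + \sum_i q i * q i.
  apply: le_trans (xle c) _; rewrite -big_split /=; apply: ler_sum => i _.
  rewrite /p /q; case: (leP (z i) c) => h.
    rewrite (max_r (_ : z i - c <= 0)) ?subr_le0 // max_l ?subr_ge0 //.
    have -> : (c - z i) * (c - z i) = (z i - c) * (z i - c) by ring.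
    by rewrite mul0r add0r.
  rewrite (max_l (_ : 0 <= z i - c)) ?subr_ge0 ?(ltW h) // max_r ?subr_le0 ?(ltW h) //.
  by rewrite mul0r addr0.
have hn : (0 < n)%N := leq_ltn_trans (leq0n s) (ltn_ord s).
have gen : forall S : {set 'I_n}, s \in S -> t \notin S ->
   (\sum_i x i * x i) * (n%:R ^+ 2 * (cut_size adj S)%:R ^+ 2) <=
     64 * (dmax adj)%:R * (#|S|%:R ^+ 2 * #|~: S|%:R ^+ 2) ->
   exists S0 : {set 'I_n}, [/\ s \in S0, t \notin S0 &
     \sum_i x i * x i <= 64 * (dmax adj)%:R / iso_ratio R adj S0 ^+ 2].
  move=> S sS tS H; exists S; split => //; apply: finish => //.
  - by rewrite card_gt0; apply/set0Pn; exists s.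
  - by rewrite card_gt0; apply/set0Pn; exists t; rewrite inE.
  - by rewrite card_gt0; apply/set0Pn; exists (s, t); rewrite inE /= sS tS ast.
have P0 : 0 <= \sum_i p i * p i by apply: sumr_ge0 => i _; rewrite -expr2 sqr_ge0.
have Q0 : 0 <= \sum_i q i * q i by apply: sumr_ge0 => i _; rewrite -expr2 sqr_ge0.
case: (leP (\sum_i q i * q i) (\sum_i p i * p i)) => hPQ.
  apply: (gen S1 s1 t1).
  set A := _ ^+ 2 * _ in h1 *.
  have A0 : 0 <= A by apply: mulr_ge0; apply: exprn_ge0.
  have : (\sum_i x i * x i) * A <= 2 * ((\sum_i p i * p i) * A).
    have e : \sum_i x i * x i <= 2 * \sum_i p i * p i by lra.
    by rewrite mulrA ler_wpM2r.
  move=> HH; apply: le_trans HH _.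
  have -> : 64 * (dmax adj)%:R * (#|S1|%:R ^+ 2 * #|~: S1|%:R ^+ 2) =
     2 * (32 * (dmax adj)%:R * (#|S1|%:R ^+ 2 * #|~: S1|%:R ^+ 2)) :> R.
    by ring.
  by rewrite ler_pM2l.
have sS : s \in ~: S2 by rewrite inE.
have tS : t \notin ~: S2 by rewrite inE negbK.
apply: (gen (~: S2) sS tS).
rewrite cut_compl // setCK.
set A := _ ^+ 2 * _ in h2 *.
have A0 : 0 <= A by apply: mulr_ge0; apply: exprn_ge0.
have : (\sum_i x i * x i) * A <= 2 * ((\sum_i q i * q i) * A).
  have e : \sum_i x i * x i <= 2 * \sum_i q i * q i by lra.
  by rewrite mulrA ler_wpM2r.
move=> HH; apply: le_trans HH _.
have -> : 64 * (dmax adj)%:R * (#|~: S2|%:R ^+ 2 * #|S2|%:R ^+ 2) =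
   2 * (32 * (dmax adj)%:R * (#|S2|%:R ^+ 2 * #|~: S2|%:R ^+ 2)) :> R.
  by ring.
by rewrite ler_pM2l.
Qed.
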